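(* Let $m\geq 2$ be an integer and let $T$ be a tree with at least $m$ vertices. Then, for some $s$, there are subtrees $T_1,\ldots, T_s$ of $T$ which divide $T$ and satisfy $m\leq |T_i|\leq 4m$ for each $i\in [s]$.
   Context: Subtrees $T_1,\dots,T_s$ of $T$ divide $T$ if $E(T_1),\dots,E(T_s)$ form a partition of $E(T)$. $|T_i|$ is the number of vertices of $T_i$. *)

(* Defs.v *)
(* A finite simple graph is a symmetric irreflexive relation
   on a finType; graphs/subgraphs are given by a vertex set and an edge set,
   edges being 2-element vertex sets. *)
From mathcomp Require Import all_boot.
Set Implicit Arguments. Unset Strict Implicit. Unset Printing Implicit Defensive.

Section Trees.
Variable T : finType.

Definition edges (e : rel T) : {set {set T}} :=
  [set f : {set T} | [exists x, exists y, e x y && (f == [set x; y])]].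

Definition adj (V : {set T}) (F : {set {set T}}) : rel T :=
  fun x y => [&& x \in V, y \in V, x != y & [set x; y] \in F].

Definition is_graph (V : {set T}) (F : {set {set T}}) : Prop :=
  forall f, f \in F -> f \subset V /\ #|f| = 2.

Definition connected_graph (V : {set T}) (F : {set {set T}}) : Prop :=
  forall x y, x \in V -> y \in V -> connect (adj V F) x y.

Definition acyclic_graph (V : {set T}) (F : {set {set T}}) : Prop :=
  forall c : seq T, uniq c -> 3 <= size c -> ~~ cycle (adj V F) c.

Definition is_tree (V : {set T}) (F : {set {set T}}) : Prop :=
  [/\ is_graph V F, V != set0, connected_graph V F & acyclic_graph V F].

Definition subtree (e : rel T) (V : {set T}) (F : {set {set T}}) : Prop :=
  F \subset edges e /\ is_tree V F.

Definition divide (e : rel T) (s : nat) (Ts : 'I_s -> {set T} * {set {set T}}) : Prop :=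
  [/\ forall i, subtree e (Ts i).1 (Ts i).2,
      forall i j, i != j -> [disjoint (Ts i).2 & (Ts j).2] &
      \bigcup_(i < s) (Ts i).2 = edges e].

End Trees.

(* Main.v *)
Require Import Defs.
From mathcomp Require Import all_boot.
From mathcomp Require Import zify.
Set Implicit Arguments. Unset Strict Implicit. Unset Printing Implicit Defensive.

Section Gen.
Variable T : finType.

Lemma card_bigcup_le (Z : {set T}) (F : T -> {set T}) :
  #|\bigcup_(z in Z) F z| <= \sum_(z in Z) #|F z|.
Proof.
elim/big_rec2: _ => [|z U s _ IH]; first by rewrite cards0.
by apply: leq_trans (leq_card_setU _ _) _; rewrite leq_add2l.
Qed.

Lemma card_bigcup_eq (Z : {set T}) (F : T -> {set T}) :
  (forall a b, a \in Z -> b \in Z -> a != b -> [disjoint F a & F b]) ->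
  #|\bigcup_(z in Z) F z| = \sum_(z in Z) #|F z|.
Proof.
move: {2}#|Z| (erefl #|Z|) => n; elim: n Z => [|n IH] Z cZ dis.
  by move/eqP: cZ; rewrite cards_eq0 => /eqP ->; rewrite !big_set0 cards0.
have [a aZ] : exists a, a \in Z.
  by apply/set0Pn; rewrite -card_gt0 cZ.
rewrite (big_setD1 a aZ) (big_setD1 a aZ) /=.
have cZ' : #|Z :\ a| = n by move: cZ; rewrite (cardsD1 a) aZ => -[].
rewrite -IH //; last first.
  by move=> u v; rewrite !inE => /andP[_ uZ] /andP[_ vZ]; apply: dis.
have H1 : [disjoint F a & \bigcup_(z in Z :\ a) F z].
  rewrite -setI_eq0 big_distrr /=; apply/eqP; apply: big1 => z.
  rewrite !inE => /andP[za zZ]; apply/eqP; rewrite setI_eq0.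
  by apply: dis => //; rewrite eq_sym.
by rewrite cardsU; move: H1; rewrite -setI_eq0 => /eqP ->; rewrite cards0 subn0.
Qed.

Lemma group_lemma (m : nat) (w : T -> nat) (Z : {set T}) :
  m.-1 <= \sum_(z in Z) w z -> (forall z, z \in Z -> w z < m) ->
  exists2 Z' : {set T}, Z' \subset Z & m.-1 <= (\sum_(z in Z') w z) <= (m.-1).*2.
Proof.
move: {2}#|Z| (erefl #|Z|) => n; elim: n Z => [|n IH] Z cZ s1 sm.
  exists Z => //; rewrite s1 /=.
  by move/eqP: cZ; rewrite cards_eq0 => /eqP ->; rewrite big_set0.
have [hs|hs] := leqP (\sum_(z in Z) w z) (m.-1).*2.
  by exists Z => //; rewrite s1 hs.
have [a aZ] : exists a, a \in Z.
  by apply/set0Pn; rewrite -card_gt0 cZ.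
have cZ' : #|Z :\ a| = n by move: cZ; rewrite (cardsD1 a) aZ => -[].
move: hs; rewrite (big_setD1 a aZ) /= => hs.
have wa := sm a aZ.
have [||Z' sub H] := IH (Z :\ a) cZ'.
- move: hs wa; rewrite -addnn; lia.
- by move=> z; rewrite inE => /andP[_]; apply: sm.
- by exists Z' => //; apply: subset_trans sub (subsetDl _ _).
Qed.

End Gen.
Section Graph.
Variable T : finType.
Variable e : rel T.
Hypothesis esym : symmetric e.
Hypothesis eirr : irreflexive e.
Hypothesis eacyc : forall c : seq T, uniq c -> 3 <= size c -> ~~ cycle e c.

Definition rr (V : {set T}) : rel T := fun x y => [&& x \in V, y \in V & e x y].
Definition cn (V : {set T}) := forall x y, x \in V -> y \in V -> connect (rr V) x y.
Definition Br (V : {set T}) y z := [set w in V :\ y | connect (rr (V :\ y)) z w].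

Lemma rr_sym V : symmetric (rr V).
Proof. by move=> x y; rewrite /rr esym andbCA. Qed.

Lemma rr_mono (S S' : {set T}) a b : S \subset S' -> connect (rr S) a b -> connect (rr S') a b.
Proof.
move=> sub; apply: connect_sub => x y /and3P[xS yS exy]; apply: connect1.
by rewrite /rr (subsetP sub _ xS) (subsetP sub _ yS).
Qed.

Lemma path_rr_in S x p : path (rr S) x p -> all (mem S) p.
Proof.
elim: p x => //= y p IH x /andP[/and3P[_ yS _] /IH]; by rewrite yS.
Qed.

Lemma path_rr_e S x p : path (rr S) x p -> path e x p.
Proof. by apply: sub_path => a b /and3P[]. Qed.

Lemma path_rr_restrict (S W : {set T}) a q : path (rr S) a q -> a \in W -> all (mem W) q -> path (rr W) a q.
Proof.
elim: q a => //= b q IH a /andP[/and3P[_ _ eab] pq] aW /andP[bW aq].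
by rewrite /rr aW bW eab /=; apply: IH.
Qed.

Lemma conn_comp (W : {set T}) z w : z \in W -> connect (rr W) z w ->
  connect (rr [set u in W | connect (rr W) z u]) z w.
Proof.
move=> zW /connectP[p pp ->].
set S := [set u in W | connect (rr W) z u].
suff H : forall a, path (rr W) a p -> connect (rr W) z a -> connect (rr S) z a ->
  connect (rr S) z (last a p) by apply: H.
elim: p {pp} => //= b p IH a /andP[/and3P[aW bW eab] pp] cza Sa.
have czb : connect (rr W) z b by apply: connect_trans cza (connect1 _); rewrite /rr aW bW.
apply: IH => //.
apply: connect_trans Sa (connect1 _).
by rewrite /rr !inE aW bW cza czb.
Qed.

Lemma conn_root (S : {set T}) y : y \in S -> (forall a, a \in S -> connect (rr S) y a) -> cn S.
Proof.
move=> yS H a b aS bS; apply: connect_trans (H b bS).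
by rewrite (sym_connect_sym (@rr_sym S)); apply: H.
Qed.

Lemma Br_sub (V : {set T}) y z : Br V y z \subset V :\ y.
Proof. by apply/subsetP => w; rewrite inE => /andP[]. Qed.

Lemma Br_subV (V : {set T}) y z : Br V y z \subset V.
Proof. by apply: subset_trans (Br_sub _ _ _) (subsetDl _ _). Qed.

Lemma Br_z (V : {set T}) y z : z \in V -> e y z -> z \in Br V y z.
Proof.
move=> zV eyz; rewrite inE connect0 andbT !inE zV andbT.
by apply: contraTneq eyz => ->; rewrite eirr.
Qed.

Lemma Br_conn (V : {set T}) y z w : z \in V -> e y z -> w \in Br V y z -> connect (rr (Br V y z)) z w.
Proof.
move=> zV eyz; rewrite inE => /andP[_ c]; apply: conn_comp => //.
by move: (Br_z zV eyz); rewrite inE => /andP[].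
Qed.

Lemma Br_edge (V : {set T}) y z a b : a \in Br V y z -> b \in V -> b != y -> e a b -> b \in Br V y z.
Proof.
rewrite !inE => /andP[/andP[ay aV] c] bV nby eab.
rewrite nby bV /=; apply: connect_trans c (connect1 _).
by rewrite /rr !inE ay aV nby bV.
Qed.

Lemma Br_disj (V : {set T}) y z1 z2 : z1 \in V -> z2 \in V -> e y z1 -> e y z2 -> z1 != z2 ->
  [disjoint Br V y z1 & Br V y z2].
Proof.
move=> z1V z2V e1 e2 n12.
rewrite -setI_eq0; apply/eqP/setP => w; rewrite in_set0 in_setI; apply/negP => /andP[].
rewrite !inE => /andP[_ c1] /andP[_ c2].
have : connect (rr (V :\ y)) z1 z2.
  by apply: connect_trans c1 _; rewrite (sym_connect_sym (@rr_sym _)).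
move=> /connectP[p pp E]; move: E; case: (shortenP pp) => p' pp' up' _ E.
have z1W : z1 \in V :\ y by move: (Br_z z1V e1); rewrite inE => /andP[].
have allW := path_rr_in pp'.
have := eacyc (c := y :: z1 :: p').
rewrite /= rcons_path (path_rr_e pp') -E [e z2 y]esym e2 e1 /=.
move=> H; have S3 : 2 < (size p').+2.
  by case: p' E {pp' up' allW H} => //= E; move: n12; rewrite E eqxx.
have U : [&& y \notin z1 :: p', z1 \notin p' & uniq p'].
  rewrite -/(uniq (z1 :: p')) up' andbT.
  apply/negP => yin.
  have : all (mem (V :\ y)) (z1 :: p') by rewrite /= z1W allW.
  by move/allP => /(_ y yin); rewrite !inE eqxx.
by move: (H U S3).
Qed.

Lemma branch_of (V S : {set T}) y w : S \subset V -> y \in S -> w \in S -> w != y ->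
  connect (rr S) y w -> exists2 z, (z \in S) && e y z & w \in Br V y z.
Proof.
move=> SV yS wS wy /connectP[p pp E]; move: E; case: (shortenP pp) => p' pp' up' _ E.
case: p' pp' up' E => [|z q] /=; first by move=> _ _ E; move: wy; rewrite E eqxx.
move=> /andP[/and3P[_ zS eyz] pq] /andP[ynin uq] E.
exists z; first by rewrite zS eyz.
have allS := path_rr_in pq.
have allW : all (mem (V :\ y)) q.
  apply/allP => u uq'; rewrite !inE (subsetP SV) ?andbT.
    by apply: contraNneq ynin => <-; rewrite inE uq' orbT.
  exact: (allP allS).
have zW : z \in V :\ y.
  by rewrite !inE (subsetP SV _ zS) andbT; apply: contraNneq ynin => <-; rewrite inE eqxx.
rewrite inE; apply/andP; split.
  by rewrite E !inE -E wy (subsetP SV _ wS).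
apply/connectP; exists q => //; exact: path_rr_restrict pq zW allW.
Qed.


Definition ind (S : {set T}) := [set f in edges e | f \subset S].

Lemma indP S f : (f \in ind S) = (f \in edges e) && (f \subset S).
Proof. by rewrite /ind in_set. Qed.

Lemma edges_card f : f \in edges e -> #|f| = 2.
Proof.
rewrite inE => /existsP[a /existsP[b /andP[eab /eqP ->]]].
by rewrite cards2; case: eqP eab => // ->; rewrite eirr.
Qed.

Lemma edges_set2 a b : e a b -> [set a; b] \in edges e.
Proof. by move=> eab; apply/imsetP || (rewrite inE; apply/existsP; exists a; apply/existsP; exists b; rewrite eab eqxx). Qed.

Lemma ind_mono (S S' : {set T}) : S \subset S' -> ind S \subset ind S'.
Proof.
move=> sub; apply/subsetP => f; rewrite !inE => /andP[-> fS] /=.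
exact: subset_trans fS sub.
Qed.

Lemma split_core (m : nat) (V : {set T}) y (Z : {set T}) :
  2 <= m -> cn V -> 4 * m < #|V| -> y \in V ->
  Z \subset [set z in V | e y z] ->
  (forall z, z \in Z -> #|Br V y z| < m) ->
  m.-1 <= \sum_(z in Z) #|Br V y z| ->
  exists A B : {set T}, [/\ cn A, cn B, m <= #|A| <= 4 * m, m <= #|B| & #|B| < #|V|] /\
     ind V = ind A :|: ind B /\ [disjoint ind A & ind B].
Proof.
move=> m2 cV big yV Zsub Zlt Zsum.
have [Z' Z'sub hZ'] := group_lemma Zsum Zlt.
have Z'n : forall z, z \in Z' -> z \in V /\ e y z.
  by move=> z /(subsetP Z'sub) /(subsetP Zsub); rewrite inE => /andP[].
set U := \bigcup_(z in Z') Br V y z.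
have hU : U \subset V :\ y.
  by apply/bigcupsP => z _; apply: Br_sub.
have yU : y \notin U by apply/negP => /(subsetP hU); rewrite !inE eqxx.
have UV : U \subset V by apply: subset_trans hU (subsetDl _ _).
have cardU : #|U| = \sum_(z in Z') #|Br V y z|.
  apply: card_bigcup_eq => a b aZ bZ ab.
  have [aV ea] := Z'n a aZ; have [bV eb] := Z'n b bZ.
  exact: Br_disj.
set A := y |: U.
set B := V :\: U.
have cA : #|A| = #|U|.+1 by rewrite /A cardsU1 yU.
have cB : #|B| = #|V| - #|U|.
  by rewrite /B cardsD (setIidPr UV).
have cUV : #|U| <= #|V| by apply: subset_leq_card.
have yB : y \in B by rewrite !inE yU yV.
have AV : A \subset V by rewrite /A subUset sub1set yV UV.
have BV : B \subset V by apply: subsetDl.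
have UA : forall a b, a \in U -> b \in V -> e a b -> b \in A.
  move=> a b /bigcupP[z zZ aB] bV eab.
  rewrite /A !inE; case: eqP => //= /eqP nby.
  apply/bigcupP; exists z => //; exact: Br_edge aB bV nby eab.
have AB1 : A :&: B \subset [set y].
  apply/subsetP => u; rewrite !inE => /andP[/orP[->//|uU] /andP[uU' _]].
  by rewrite uU in uU'.
exists A, B; split; [split|split].
- apply: (conn_root (y := y)); first by rewrite /A setU11.
  move=> a; rewrite /A !inE => /orP[/eqP ->|/bigcupP[z zZ aB]]; first exact: connect0.
  have [zV eyz] := Z'n z zZ.
  have BrA : Br V y z \subset A.
    by apply: subset_trans (subsetUr _ _); apply: (bigcup_sup z zZ).
  apply: connect_trans (connect1 _) (rr_mono BrA (Br_conn zV eyz aB)).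
  by rewrite /rr setU11 eyz (subsetP BrA _ (Br_z zV eyz)).
- apply: (conn_root yB) => b bB.
  have [<-|nby] := eqVneq y b; first exact: connect0.
  have nby' : b != y by rewrite eq_sym.
  have [z /andP[zV eyz] bBr] := branch_of (subxx V) yV (subsetP BV _ bB) (nby' : b != y) (cV _ _ yV (subsetP BV _ bB)).
  have BrB : Br V y z \subset B.
    apply/subsetP => u uBr; rewrite !inE (subsetP (Br_subV V y z) _ uBr) andbT.
    apply/bigcupP => -[z' z'Z uBr'].
    have [z'V eyz'] := Z'n z' z'Z.
    have [ez|nz] := eqVneq z z'.
      move: bB; rewrite !inE => /andP[/bigcupP] []; exists z' => //; by rewrite -ez.
    have := Br_disj zV z'V eyz eyz' nz.
    by rewrite -setI_eq0 => /eqP/setP/(_ u); move: uBr uBr'; rewrite !inE => /andP[-> ->] /andP[_ ->].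
  apply: connect_trans (connect1 _) (rr_mono BrB (Br_conn zV eyz bBr)).
  by rewrite /rr yB eyz (subsetP BrB _ (Br_z zV eyz)).
- by rewrite cA; move: hZ' m2; rewrite cardU -addnn; lia.
- by rewrite cB; move: hZ' big m2; rewrite cardU -addnn; lia.
- by rewrite cB; move: hZ' big m2 cUV; rewrite cardU -addnn; lia.
- apply/eqP; rewrite eqEsubset; apply/andP; split; last by rewrite subUset !ind_mono.
  apply/subsetP => f; rewrite inE => /andP[fe fV].
  move: (fe); rewrite inE => /existsP[a /existsP[b /andP[eab /eqP fab]]].
  have aV : a \in V by apply: (subsetP fV); rewrite fab !inE eqxx.
  have bV : b \in V by apply: (subsetP fV); rewrite fab !inE eqxx orbT.
  have fe2 := fe; rewrite inE in fe2; rewrite !inE fe2 /=.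
  case aU : (a \in U).
    by apply/orP; left; rewrite fab subUset !sub1set (UA a b) // /A !inE aU orbT.
  case bU : (b \in U).
    by apply/orP; left; rewrite fab subUset !sub1set (UA b a) // ?(esym b a) // /A !inE bU orbT.
  by apply/orP; right; rewrite fab subUset !sub1set !inE aU bU aV bV.
- rewrite -setI_eq0; apply/eqP/setP => f; rewrite in_set0.
  apply/negP => /setIP[]; rewrite !indP => /andP[fe fA] /andP[_ fB].
  have : f \subset [set y] by apply: subset_trans AB1; rewrite subsetI fA fB.
  by move/subset_leq_card; rewrite cards1 (edges_card fe).
Qed.

Lemma Br_proper (V : {set T}) x y z : x \in V -> y \in V -> z \in V -> e x y -> e y z -> z != x ->
  Br V y z \proper Br V x y.
Proof.
move=> xV yV zV exy eyz zx.
have eyx : e y x by rewrite esym.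
have xn : x \notin Br V y z.
  apply/negP => xin.
  have := Br_disj zV xV eyz eyx zx.
  rewrite -setI_eq0 => /eqP/setP/(_ x); rewrite in_setI xin (Br_z xV eyx) in_set0.
  by [].
have sub : Br V y z \subset V :\ x.
  apply/subsetP => u uB; rewrite !inE (subsetP (Br_subV V y z) _ uB) andbT.
  by apply: contraNneq xn => <-.
apply/properP; split.
  apply/subsetP => u uB; rewrite inE (subsetP sub _ uB) /=.
  apply: connect_trans (connect1 _) (rr_mono sub (Br_conn zV eyz uB)).
  rewrite /rr eyz (subsetP sub _ (Br_z zV eyz)) !inE yV andbT /=.
  by rewrite andbT; apply: contraTneq exy => ->; rewrite eirr.
exists y; first exact: Br_z.
by apply/negP => /(subsetP (Br_sub V y z)); rewrite !inE eqxx.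
Qed.

Lemma Br_cover (V : {set T}) x y : x \in V -> y \in V -> e x y ->
  Br V x y :\ y \subset \bigcup_(z in [set z in V | e y z] :\ x) Br V y z.
Proof.
move=> xV yV exy; apply/subsetP => u; rewrite in_setD1 => /andP[uy uB].
have yB := Br_z yV exy.
have [z /andP[zB eyz] uBz] := branch_of (Br_subV V x y) yB uB uy (Br_conn yV exy uB).
apply/bigcupP; exists z => //.
move: (subsetP (Br_sub V x y) _ zB); rewrite !inE => /andP[-> ->].
by rewrite eyz.
Qed.

Lemma V_cover (V : {set T}) y : cn V -> y \in V ->
  V :\ y \subset \bigcup_(z in [set z in V | e y z]) Br V y z.
Proof.
move=> cV yV; apply/subsetP => u; rewrite in_setD1 => /andP[uy uV].
have [z /andP[zV eyz] uBz] := branch_of (subxx V) yV uV uy (cV _ _ yV uV).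
by apply/bigcupP; exists z => //; rewrite inE zV.
Qed.

Lemma split_step (m : nat) (V : {set T}) :
  2 <= m -> cn V -> 4 * m < #|V| ->
  exists A B : {set T}, [/\ cn A, cn B, m <= #|A| <= 4 * m, m <= #|B| & #|B| < #|V|] /\
     ind V = ind A :|: ind B /\ [disjoint ind A & ind B].
Proof.
move=> m2 cV big.
have [y yV] : exists y, y \in V by apply/set0Pn; rewrite -card_gt0; lia.
case: (boolP [exists x, exists y, [&& x \in V, y \in V, e x y & m <= #|Br V x y|]]).
- move=> /existsP[x0 /existsP[y1 /and4P[x0V y1V e01 m01]]].
  pose P n := [exists x, exists y, [&& x \in V, y \in V, e x y & #|Br V x y| == n]] && (m <= n).
  have exP : exists n, P n.
    exists #|Br V x0 y1|; rewrite /P m01 andbT; apply/existsP; exists x0; apply/existsP; exists y1.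
    by rewrite x0V y1V e01 eqxx.
  case: (ex_minnP exP) => n /andP[/existsP[x /existsP[y0 /and4P[xV y0V exy /eqP cBr]]] mn] nmin.
  apply: (split_core (y := y0) (Z := [set z in V | e y0 z] :\ x)) => //.
  + exact: subsetDl.
  + move=> z; rewrite !inE => /andP[zx /andP[zV ez]].
    have := proper_card (Br_proper xV y0V zV exy ez zx); rewrite cBr => lt.
    rewrite ltnNge; apply/negP => hm.
    have : P #|Br V y0 z|.
      rewrite /P hm andbT; apply/existsP; exists y0; apply/existsP; exists z.
      by rewrite y0V zV ez eqxx.
    by move/nmin; lia.
  + apply: leq_trans (card_bigcup_le _ _).
    apply: leq_trans (subset_leq_card (Br_cover xV y0V exy)).
    rewrite (cardsD1 y0) (Br_z y0V exy) in cBr; lia.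
- rewrite negb_exists => /forallP hD.
  apply: (split_core (y := y) (Z := [set z in V | e y z])) => //.
  + move=> z; rewrite inE => /andP[zV ez]; move: (hD y); rewrite negb_exists => /forallP/(_ z).
    by rewrite yV zV ez /= -ltnNge.
  + apply: leq_trans (card_bigcup_le _ _).
    apply: leq_trans (subset_leq_card (V_cover cV yV)).
    move: big; rewrite (cardsD1 y) yV; lia.
Qed.


Lemma ind0 : ind set0 = set0.
Proof.
apply/setP => f; rewrite indP in_set0 subset0; apply/negP => /andP[fe /eqP f0].
by move: (edges_card fe); rewrite f0 cards0.
Qed.

Lemma ind_in_big (Ps : seq {set T}) P : P \in Ps -> ind P \subset \bigcup_(Q <- Ps) ind Q.
Proof.
elim: Ps => //= Q Ps IH; rewrite in_cons big_cons => /orP[/eqP->|/IH H].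
  exact: subsetUl.
exact: subset_trans H (subsetUr _ _).
Qed.

Lemma ind_nth_big (Ps : seq {set T}) j : ind (nth set0 Ps j) \subset \bigcup_(Q <- Ps) ind Q.
Proof.
case: (ltnP j (size Ps)) => hj; first by apply: ind_in_big; apply: mem_nth.
by rewrite nth_default // ind0 sub0set.
Qed.

Lemma divide_gen (m : nat) : 2 <= m -> forall V : {set T}, cn V -> m <= #|V| ->
  exists Ps : seq {set T},
  [/\ forall P, P \in Ps -> cn P /\ m <= #|P| <= 4 * m,
      forall i j, i != j -> [disjoint ind (nth set0 Ps i) & ind (nth set0 Ps j)] &
      \bigcup_(P <- Ps) ind P = ind V].
Proof.
move=> m2 V; move: {2}#|V| (leqnn #|V|) => n; elim: n V => [|n IH] V cVn cV mV.
  by move: mV cVn; lia.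
have [small|big] := leqP #|V| (4 * m).
  exists [:: V]; split.
  - by move=> P; rewrite inE => /eqP ->; rewrite mV small.
  - by move=> [|i] [|j] //= _; rewrite ?nth_nil ind0 -setI_eq0 ?setI0 ?set0I.
  - by rewrite big_cons big_nil setU0.
have [A [B [[cA cB hA hB hBV] [cover dis]]]] := split_step m2 cV big.
have [|Ps [Pgood Pdis Pcov]] := IH B _ cB hB; first by move: hBV cVn; lia.
exists (A :: Ps); split.
- by move=> P; rewrite in_cons => /orP[/eqP ->|/Pgood //]; split.
- move=> [|i] [|j] //= ij.
  + by apply: disjointWr dis; rewrite -Pcov; apply: ind_nth_big.
  + by rewrite disjoint_sym; apply: disjointWr dis; rewrite -Pcov; apply: ind_nth_big.
  + by apply: Pdis.
- by rewrite big_cons Pcov cover.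
Qed.

Lemma set2_edges x y : [set x; y] \in edges e -> e x y.
Proof.
rewrite inE => /existsP[a /existsP[b /andP[eab /eqP E]]].
have xa : x \in [set a; b] by rewrite -E set21.
have ya : y \in [set a; b] by rewrite -E set22.
have ax : a \in [set x; y] by rewrite E set21.
have bx : b \in [set x; y] by rewrite E set22.
move: xa ya ax bx; rewrite !inE.
case/orP => /eqP xa; case/orP => /eqP yb; subst => //; rewrite ?orbb ?eqxx.
- by move=> _ /eqP ba; move: eab; rewrite ba eirr.
- by rewrite esym.
- by move=> /eqP ab; move: eab; rewrite ab eirr.
Qed.

Lemma adj_rr (S : {set T}) : adj S (ind S) =2 rr S.
Proof.
move=> x y; rewrite /adj /rr indP.
case xS: (x \in S); case yS: (y \in S) => //=.
have -> : [set x; y] \subset S by rewrite subUset !sub1set xS yS.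
rewrite andbT; apply/idP/idP => [/andP[_ /set2_edges] //|exy].
rewrite edges_set2 // andbT; by apply: contraTneq exy => ->; rewrite eirr.
Qed.

Lemma piece_tree (P : {set T}) : cn P -> 2 <= #|P| -> subtree e P (ind P).
Proof.
move=> cP cardP; split.
  by apply/subsetP => f; rewrite indP => /andP[].
split.
- move=> f; rewrite indP => /andP[fe fP]; split => //; exact: edges_card.
- by rewrite -card_gt0; apply: leq_trans cardP.
- by move=> x y xP yP; rewrite (eq_connect (adj_rr P)); apply: cP.
- move=> c uc sc; apply/negP => cyc.
  have := eacyc uc sc; apply/negP/negPn.
  by apply: sub_cycle cyc => a b; rewrite adj_rr => /and3P[].
Qed.


End Graph.

Unset Implicit Arguments.

Theorem lemma3p7 (m : nat) (T : finType) (e : rel T) :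
  2 <= m ->
  symmetric e -> irreflexive e ->
  is_tree [set: T] (edges e) ->
  m <= #|T| ->
  exists (s : nat) (Ts : 'I_s -> {set T} * {set {set T}}),
    divide e Ts /\ (forall i, m <= #|(Ts i).1| <= 4 * m).
Proof.
move=> m2 esym eirr [_ _ conn acyc] mT.
have indT : ind e [set: T] = edges e.
  by apply/setP => f; rewrite indP subsetT andbT.
have rrT : rr e [set: T] =2 e by move=> x y; rewrite /rr !inE.
have adjT : adj [set: T] (edges e) =2 e.
  by move=> x y; rewrite -{1}indT adj_rr // rrT.
have eacyc : forall c : seq T, uniq c -> 3 <= size c -> ~~ cycle e c.
  by move=> c uc sc; rewrite -(eq_cycle adjT); apply: acyc.
have cT : cn e [set: T].
  by move=> x y _ _; rewrite (eq_connect rrT) -(eq_connect adjT); apply: conn.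
have [|Ps [Pgood Pdis Pcov]] := divide_gen esym eirr eacyc m2 cT; first by rewrite cardsT.
exists (size Ps), (fun i => (nth set0 Ps i, ind e (nth set0 Ps i))); split.
- split.
  + move=> i /=; have [cP hP] := Pgood _ (mem_nth set0 (ltn_ord i)).
    apply: piece_tree => //; apply: leq_trans m2 _; by case/andP: hP.
  + by move=> i j ij /=; apply: Pdis.
  + by rewrite -indT -Pcov (big_nth set0) big_mkord.
- by move=> i /=; have [_ hP] := Pgood _ (mem_nth set0 (ltn_ord i)).
Qed.
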